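(* Let $X, Y \subseteq \omega$. There exists an embedding $\mathcal{B}^X \hookrightarrow \mathcal{B}^Y$ if and only if $X \le_T Y$.
   Context: A pca is a set with a partial binary application operation containing distinct $\mathrm{s},\mathrm{k}$ with $\mathrm{k}ab\downarrow=a$, $\mathrm{s}ab\downarrow$, $\mathrm{s}abc\simeq(ac)(bc)$. An embedding of pcas is an injective map $f$ with: if $ab$ is defined then $f(a)f(b)$ is defined and equals $f(ab)$. $\mathcal{B}^Z$: elements are the partial $Z$-computable functions $\omega\rightharpoonup\omega$, with $\varphi\cdot\psi$ the partial function $n\mapsto\Phi^{\varphi\oplus\psi}_{\varphi(0)}(n)$, where $\Phi_e$ is the $e$-th Turing functional, $(\varphi\oplus\psi)(2n)\simeq\varphi(n)$, $(\varphi\oplus\psi)(2n+1)\simeq\psi(n)$, and querying the oracle at an undefined point diverges. *)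

(* Defs.v *)
From HB Require Import structures.
From mathcomp Require Import all_boot.
Set Implicit Arguments. Unset Strict Implicit. Unset Printing Implicit Defensive.

Definition pfun := nat -> option nat.

Inductive code : Type :=
| cZero
| cSucc
| cProj (i : nat)
| cOracle
| cComp (g : code) (hs : seq code)
| cPrec (b s : code)
| cMu (g : code).

Inductive eval (f : pfun) : code -> seq nat -> nat -> Prop :=
| ev_zero args : eval f cZero args 0
| ev_succ x args : eval f cSucc (x :: args) x.+1
| ev_proj i args : i < size args -> eval f (cProj i) args (nth 0 args i)
| ev_oracle x args v : f x = Some v -> eval f cOracle (x :: args) v
| ev_comp g hs args ys v :
    evals f hs args ys -> eval f g ys v -> eval f (cComp g hs) args v
| ev_prec0 b s args v : eval f b args v -> eval f (cPrec b s) (0 :: args) v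
| ev_precS b s n args w v :
    eval f (cPrec b s) (n :: args) w -> eval f s (n :: w :: args) v ->
    eval f (cPrec b s) (n.+1 :: args) v
| ev_mu g n args :
    eval f g (n :: args) 0 ->
    (forall m, m < n -> exists k, eval f g (m :: args) k.+1) ->
    eval f (cMu g) args n
with evals (f : pfun) : seq code -> seq nat -> seq nat -> Prop :=
| evs_nil args : evals f [::] args [::]
| evs_cons h hs args y ys :
    eval f h args y -> evals f hs args ys -> evals f (h :: hs) args (y :: ys).

(** Effective Goedel numbering of codes via MathComp's countable GenTree encoding. *)
Fixpoint code_enc (c : code) : GenTree.tree nat :=
  match c with
  | cZero => GenTree.Node 0 [::]
  | cSucc => GenTree.Node 1 [::]
  | cProj i => GenTree.Node 2 [:: GenTree.Leaf i]
  | cOracle => GenTree.Node 3 [::]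
  | cComp g hs => GenTree.Node 4 (code_enc g :: map code_enc hs)
  | cPrec b s => GenTree.Node 5 [:: code_enc b; code_enc s]
  | cMu g => GenTree.Node 6 [:: code_enc g]
  end.

Fixpoint code_dec (t : GenTree.tree nat) : code :=
  match t with
  | GenTree.Node 1 [::] => cSucc
  | GenTree.Node 2 [:: GenTree.Leaf i] => cProj i
  | GenTree.Node 3 [::] => cOracle
  | GenTree.Node 4 (t :: ts) => cComp (code_dec t) (map code_dec ts)
  | GenTree.Node 5 [:: t1; t2] => cPrec (code_dec t1) (code_dec t2)
  | GenTree.Node 6 [:: t] => cMu (code_dec t)
  | _ => cZero
  end.

Fixpoint code_ind2 (P : code -> Prop)
  (H0 : P cZero) (H1 : P cSucc) (H2 : forall i, P (cProj i)) (H3 : P cOracle)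
  (H4 : forall g hs, P g -> foldr (fun x acc => P x /\ acc) True hs -> P (cComp g hs))
  (H5 : forall b s, P b -> P s -> P (cPrec b s))
  (H6 : forall g, P g -> P (cMu g)) (c : code) {struct c} : P c :=
  let rec := code_ind2 H0 H1 H2 H3 H4 H5 H6 in
  match c with
  | cZero => H0
  | cSucc => H1
  | cProj i => H2 i
  | cOracle => H3
  | cComp g hs => H4 g hs (rec g)
      ((fix F (l : seq code) : foldr (fun x acc => P x /\ acc) True l :=
          match l with
          | [::] => I
          | x :: l' => conj (rec x) (F l')
          end) hs)
  | cPrec b s => H5 b s (rec b) (rec s)
  | cMu g => H6 g (rec g)
  end.

Lemma code_encK : cancel code_enc code_dec.
Proof.
elim/code_ind2 => //= [g hs IHg IHhs|b s -> ->|g ->] //.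
rewrite IHg; congr cComp; rewrite -map_comp.
elim: hs IHhs => //= x l IH [Hx /IH ->]; by rewrite Hx.
Qed.

HB.instance Definition _ := Countable.copy code (can_type code_encK).

Definition Phi (f : pfun) (e n v : nat) : Prop :=
  match (unpickle e : option code) with
  | Some c => eval f c [:: n] v
  | None => False
  end.

Definition chi (Z : nat -> bool) : pfun := fun n => Some (nat_of_bool (Z n)).

Definition Zcomputable (Z : nat -> bool) (phi : pfun) : Prop :=
  exists e, forall n v, phi n = Some v <-> Phi (chi Z) e n v.

Definition turing_le (X Y : nat -> bool) : Prop := Zcomputable Y (chi X).

Definition pjoin (phi psi : pfun) : pfun :=
  fun m => if odd m then psi m./2 else phi m./2.

Definition BZ (Z : nat -> bool) := {phi : pfun | Zcomputable Z phi}.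

Definition appR (phi psi : pfun) (n v : nat) : Prop :=
  exists e, phi 0 = Some e /\ Phi (pjoin phi psi) e n v.

Definition is_app (phi psi c : pfun) : Prop :=
  forall n v, c n = Some v <-> appR phi psi n v.

Definition pca_embedding (X Y : nat -> bool) (f : BZ X -> BZ Y) : Prop :=
  injective f /\
  forall a b c : BZ X, is_app (sval a) (sval b) (sval c) ->
    is_app (sval (f a)) (sval (f b)) (sval (f c)).

(* Main.v *)
From Stdlib Require Import ProofIrrelevance FunctionalExtensionality Classical.
Require Import Defs.
From mathcomp Require Import all_boot zify.
Set Implicit Arguments. Unset Strict Implicit. Unset Printing Implicit Defensive.

Section Ind.
Variable f : pfun.
Variable P : code -> seq nat -> nat -> Prop.
Variable Q : seq code -> seq nat -> seq nat -> Prop.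
Hypothesis Hzero : forall args, P cZero args 0.
Hypothesis Hsucc : forall x args, P cSucc (x :: args) x.+1.
Hypothesis Hproj : forall i args, i < size args -> P (cProj i) args (nth 0 args i).
Hypothesis Horacle : forall x args v, f x = Some v -> P cOracle (x :: args) v.
Hypothesis Hcomp : forall g hs args ys v, evals f hs args ys -> Q hs args ys ->
  eval f g ys v -> P g ys v -> P (cComp g hs) args v.
Hypothesis Hprec0 : forall b s args v, eval f b args v -> P b args v -> P (cPrec b s) (0 :: args) v.
Hypothesis HprecS : forall b s n args w v,
  eval f (cPrec b s) (n :: args) w -> P (cPrec b s) (n :: args) w ->
  eval f s (n :: w :: args) v -> P s (n :: w :: args) v -> P (cPrec b s) (n.+1 :: args) v.
Hypothesis Hmu : forall g n args, eval f g (n :: args) 0 -> P g (n :: args) 0 ->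
  (forall m, m < n -> exists k, eval f g (m :: args) k.+1 /\ P g (m :: args) k.+1) ->
  P (cMu g) args n.
Hypothesis Hnil : forall args, Q [::] args [::].
Hypothesis Hcons : forall h hs args y ys, eval f h args y -> P h args y ->
  evals f hs args ys -> Q hs args ys -> Q (h :: hs) args (y :: ys).

Fixpoint eval_ind' c args v (H : eval f c args v) {struct H} : P c args v :=
  match H in eval _ c args v return P c args v with
  | ev_zero args => Hzero args
  | ev_succ x args => Hsucc x args
  | ev_proj i args Hi => Hproj Hi
  | ev_oracle x args v Hx => Horacle args Hx
  | ev_comp g hs args ys v Hs Hg => Hcomp Hs (evals_ind' Hs) Hg (eval_ind' Hg)
  | ev_prec0 b s args v Hb => Hprec0 s Hb (eval_ind' Hb)
  | ev_precS b s n args w v H1 H2 => HprecS H1 (eval_ind' H1) H2 (eval_ind' H2)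
  | ev_mu g n args H0 Hm => Hmu H0 (eval_ind' H0)
      (fun m Hlt => match Hm m Hlt with
                    | ex_intro k Hk => ex_intro _ k (conj Hk (eval_ind' Hk)) end)
  end
with evals_ind' hs args ys (H : evals f hs args ys) {struct H} : Q hs args ys :=
  match H in evals _ hs args ys return Q hs args ys with
  | evs_nil args => Hnil args
  | evs_cons h hs args y ys Hh Hhs => Hcons Hh (eval_ind' Hh) Hhs (evals_ind' Hhs)
  end.
End Ind.

Lemma eval_det f c args v1 : eval f c args v1 -> forall v2, eval f c args v2 -> v1 = v2.
Proof.
move=> H; pattern c, args, v1; revert c args v1 H.
apply: (@eval_ind' f _ (fun hs args ys => forall ys2, evals f hs args ys2 -> ys = ys2)).
- by move=> args v2 H; inversion H.
- by move=> x args v2 H; inversion H.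
- by move=> i args _ v2 H; inversion H.
- by move=> x args v Hx v2 H; inversion H; subst; congruence.
- move=> g hs args ys v _ IHs _ IHg v2 H; inversion H; subst.
  have E := IHs _ ltac:(eassumption); subst; exact: IHg.
- by move=> b s args v _ IHb v2 H; inversion H; subst; apply: IHb.
- move=> b s n args w v _ IH1 _ IH2 v2 H; inversion H; subst.
  have E := IH1 _ ltac:(eassumption); subst; exact: IH2.
- move=> g n args _ IH0 Hm v2 H; inversion H; subst.
  case: (ltngtP n v2) => // Hlt;
  [ by case: (H2 _ Hlt) => k /IH0
  | by case: (Hm _ Hlt) => k [_ /(_ _ H1)] ].
- by move=> args ys2 H; inversion H.
- move=> h hs args y ys _ IHh _ IHhs ys2 H; inversion H; subst.
  by rewrite (IHh _ ltac:(eassumption)) (IHhs _ ltac:(eassumption)).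
Qed.

Inductive pe : Type :=
| Var of nat | Cst of nat | Suc of pe | Prd of pe | Orc of pe
| Let of pe & pe | BSum of pe & pe | Iter of pe & pe & pe.

Fixpoint bsum n (F : nat -> nat) := if n is k.+1 then bsum k F + F k else 0.

Fixpoint den (o : nat -> nat) (env : seq nat) (e : pe) : nat :=
  match e with
  | Var j => nth 0 env j
  | Cst n => n
  | Suc a => (den o env a).+1
  | Prd a => (den o env a).-1
  | Orc a => o (den o env a)
  | Let a b => den o (den o env a :: env) b
  | BSum n b => bsum (den o env n) (fun i => den o (i :: env) b)
  | Iter n g x => iter (den o env n) (fun acc => den o (acc :: env) g) (den o env x)
  end.

Definition addc := cPrec (cProj 0) (cComp cSucc [:: cProj 1]).
Definition projs s k := map cProj (iota s k).
Definition constc n := iter n (fun c => cComp cSucc [:: c]) cZero.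

Fixpoint compile (k : nat) (e : pe) : code :=
  match e with
  | Var j => if j < k then cProj j else cZero
  | Cst n => constc n
  | Suc a => cComp cSucc [:: compile k a]
  | Prd a => cComp (cPrec cZero (cProj 0)) [:: compile k a]
  | Orc a => cComp cOracle [:: compile k a]
  | Let a b => cComp (compile k.+1 b) (compile k a :: projs 0 k)
  | BSum n b => cComp (cPrec cZero (cComp addc [:: cProj 1;
                   cComp (compile k.+1 b) (cProj 0 :: projs 2 k)]))
                 (compile k n :: projs 0 k)
  | Iter n g x => cComp (cPrec (compile k x) (cComp (compile k.+1 g) (cProj 1 :: projs 2 k)))
                 (compile k n :: projs 0 k)
  end.

Definition tot (o : nat -> nat) : pfun := fun x => Some (o x).

Section Comp.
Variable o : nat -> nat.
Local Notation ev := (eval (tot o)).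

Lemma ev_addc a b args : ev addc (a :: b :: args) (a + b).
Proof.
elim: a => [|a IH]; first by apply: ev_prec0; apply: (@ev_proj _ 0 (b :: args)).
rewrite addSn; apply: ev_precS; first exact: IH.
apply: ev_comp; first by apply: evs_cons; [apply: (@ev_proj _ 1 (a :: (a + b) :: b :: args))|apply: evs_nil].
exact: ev_succ.
Qed.

Lemma ev_projs s k args : s + k <= size args ->
  evals (tot o) (projs s k) args [seq nth 0 args j | j <- iota s k].
Proof.
elim: k s => [|k IH] s H /=; first exact: evs_nil.
apply: evs_cons; first by apply: ev_proj; lia.
apply: IH; lia.
Qed.

Lemma map_nth_iota0 (env : seq nat) : [seq nth 0 env j | j <- iota 0 (size env)] = env.
Proof. exact: (mkseq_nth 0 env). Qed.

Lemma map_nth_iota2 a b (env : seq nat) : [seq nth 0 (a :: b :: env) j | j <- iota 2 (size env)] = env.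
Proof.
rewrite -[2]/(2 + 0) iotaDl -map_comp.
by rewrite (eq_map (g := nth 0 env)) ?map_nth_iota0.
Qed.

Lemma ev_constc n args : ev (constc n) args n.
Proof.
elim: n => [|n IH] /=; first exact: ev_zero.
apply: ev_comp; first by apply: evs_cons; [exact: IH|exact: evs_nil].
exact: ev_succ.
Qed.

Lemma compileP e env : ev (compile (size env) e) env (den o env e).
Proof.
elim: e env => [j|n|a IH|a IH|a IH|a IHa b IHb|n IHn b IHb|n IHn g IHg x IHx] env /=.
- case: ltnP => H; first exact: ev_proj.
  by rewrite nth_default //; apply: ev_zero.
- exact: ev_constc.
- apply: ev_comp; first by apply: evs_cons; [exact: IH|exact: evs_nil].
  exact: ev_succ.
- apply: ev_comp; first by apply: evs_cons; [exact: IH|exact: evs_nil].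
  elim: (den o env a) => [|m IHm]; first by apply: ev_prec0; apply: ev_zero.
  apply: ev_precS; first exact: IHm.
  exact: (@ev_proj _ 0 [:: m; m.-1]).
- apply: ev_comp; first by apply: evs_cons; [exact: IH|exact: evs_nil].
  by apply: ev_oracle.
- apply: ev_comp; first apply: evs_cons; first exact: IHa.
  + by apply: ev_projs.
  by rewrite map_nth_iota0; apply: (IHb (_ :: env)).
- apply: ev_comp; first apply: evs_cons; first exact: IHn.
  + by apply: ev_projs.
  rewrite map_nth_iota0.
  elim: (den o env n) => [|m IHm] /=; first by apply: ev_prec0; apply: ev_zero.
  apply: ev_precS; first exact: IHm.
  apply: ev_comp; last exact: (ev_addc _ _ [::]).
  apply: evs_cons; first exact: (@ev_proj _ 1 (m :: bsum m _ :: env)).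
  apply: evs_cons; last exact: evs_nil.
  apply: ev_comp; first apply: evs_cons; first exact: (@ev_proj _ 0 (m :: bsum m _ :: env)).
  + by apply: ev_projs => /=.
  by rewrite map_nth_iota2; apply: (IHb (m :: env)).
- apply: ev_comp; first apply: evs_cons; first exact: IHn.
  + by apply: ev_projs.
  rewrite map_nth_iota0.
  elim: (den o env n) => [|m IHm] /=; first by apply: ev_prec0; apply: IHx.
  apply: ev_precS; first exact: IHm.
  apply: ev_comp; first apply: evs_cons; first exact: (@ev_proj _ 1 (m :: _ :: env)).
  + by apply: ev_projs => /=.
  by rewrite map_nth_iota2; apply: (IHg (_ :: env)).
Qed.
End Comp.

Fixpoint liftp (c : nat) (e : pe) : pe :=
  match e with
  | Var j => if j < c then Var j else Var j.+1
  | Cst n => Cst n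
  | Suc a => Suc (liftp c a)
  | Prd a => Prd (liftp c a)
  | Orc a => Orc (liftp c a)
  | Let a b => Let (liftp c a) (liftp c.+1 b)
  | BSum n b => BSum (liftp c n) (liftp c.+1 b)
  | Iter n g x => Iter (liftp c n) (liftp c.+1 g) (liftp c x)
  end.

Lemma bsum_ext n F G : (forall i, i < n -> F i = G i) -> bsum n F = bsum n G.
Proof. elim: n => //= n IH H; rewrite IH ?H // => i Hi; apply: H; lia. Qed.

Lemma iter_ext T n (F G : T -> T) x : (forall y, F y = G y) -> iter n F x = iter n G x.
Proof. by move=> H; elim: n => //= n ->. Qed.

Lemma bsum_neg_eq0 n (p : nat -> bool) : (bsum n (fun i => ~~ p i) == 0) = all p (iota 0 n).
Proof.
elim: n => // n IH; rewrite [bsum n.+1 _]/= -addn1 iotaD all_cat /= andbT -IH.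
by case: (p n); case: (bsum n _).
Qed.
Lemma bsum_pos_neq0 n (p : nat -> bool) : (bsum n (fun i => p i) != 0) = has p (iota 0 n).
Proof.
elim: n => // n IH; rewrite [bsum n.+1 _]/= -addn1 iotaD has_cat /= orbF -IH.
by case: (p n); case: (bsum n _) => //= *; rewrite addn1.
Qed.

Lemma den_lift o e c env x : c <= size env ->
  den o (take c env ++ x :: drop c env) (liftp c e) = den o env e.
Proof.
elim: e c env => [j|n|a IH|a IH|a IH|a IHa b IHb|n IHn b IHb|n IHn g IHg y IHy] c env Hc /=.
- case: ltnP => Hj /=; rewrite nth_cat size_take.
  + have ->: (if c < size env then c else size env) = c by case: ltnP; lia.
    by rewrite Hj nth_take.
  + have ->: (if c < size env then c else size env) = c by case: ltnP; lia.
    have ->: (j.+1 < c) = false by lia.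
    have ->: j.+1 - c = (j - c).+1 by lia.
    by rewrite /= nth_drop; congr nth; lia.
- by [].
- by rewrite IH.
- by rewrite IH.
- by rewrite IH.
- by rewrite IHa // (IHb c.+1 (_ :: env)).
- by rewrite IHn //; apply: bsum_ext => i _; rewrite (IHb c.+1 (_ :: env)).
- rewrite IHn // IHy //; apply: iter_ext => z; by rewrite (IHg c.+1 (_ :: env)).
Qed.

Lemma den_lift0 o e env x : den o (x :: env) (liftp 0 e) = den o env e.
Proof. by have := @den_lift o e 0 env x; rewrite take0 drop0; apply. Qed.

Definition ADD a b := Iter a (Suc (Var 0)) b.
Definition SUB a b := Iter b (Prd (Var 0)) a.
Definition MUL a b := BSum a (liftp 0 b).
Definition ISZ a := SUB (Cst 1) a.
Definition NZ a := ISZ (ISZ a).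
Definition EQB a b := ISZ (ADD (SUB a b) (SUB b a)).
Definition LEB a b := ISZ (SUB a b).
Definition LTB a b := LEB (Suc a) b.
Definition AND a b := MUL a b.
Definition OR a b := NZ (ADD a b).
Definition ITE c a b := ADD (MUL (NZ c) a) (MUL (ISZ c) b).
Definition BALL n b := ISZ (BSum n (ISZ b)).
Definition BEX n b := NZ (BSum n (NZ b)).
Arguments ADD : simpl never. Arguments SUB : simpl never. Arguments MUL : simpl never.
Arguments ISZ : simpl never. Arguments NZ : simpl never. Arguments EQB : simpl never.
Arguments LEB : simpl never. Arguments LTB : simpl never. Arguments AND : simpl never.
Arguments OR : simpl never. Arguments ITE : simpl never. Arguments BALL : simpl never.
Arguments BEX : simpl never.

Section Macros.
Variable o : nat -> nat.
Variable env : seq nat.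
Local Notation D := (den o env).

Lemma den_ADD a b : D (ADD a b) = D a + D b.
Proof. by rewrite /ADD /= addnC -iter_succn; apply: iter_ext. Qed.
Lemma den_SUB a b : D (SUB a b) = D a - D b.
Proof. rewrite /SUB /=; elim: (D b) => //= [|n ->]; by rewrite ?subn0 ?subnS. Qed.
Lemma den_MUL a b : D (MUL a b) = D a * D b.
Proof.
rewrite /MUL /=; elim: (D a) => //= n ->; by rewrite den_lift0 mulSn addnC.
Qed.
Lemma den_ISZ a : D (ISZ a) = (D a == 0).
Proof. by rewrite /ISZ den_SUB /=; case: (D a). Qed.
Lemma den_NZ a : D (NZ a) = (D a != 0).
Proof. by rewrite /NZ !den_ISZ; case: (D a). Qed.
Lemma den_EQB a b : D (EQB a b) = (D a == D b).
Proof. rewrite /EQB den_ISZ den_ADD !den_SUB; case: eqP; case: eqP => //; lia. Qed.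
Lemma den_LEB a b : D (LEB a b) = (D a <= D b).
Proof. by rewrite /LEB den_ISZ den_SUB subn_eq0. Qed.
Lemma den_LTB a b : D (LTB a b) = (D a < D b).
Proof. by rewrite /LTB den_LEB. Qed.
Lemma den_AND a b (x y : bool) : D a = x -> D b = y -> D (AND a b) = x && y.
Proof. by rewrite /AND den_MUL => -> ->; case: x; case: y. Qed.
Lemma den_OR a b (x y : bool) : D a = x -> D b = y -> D (OR a b) = x || y.
Proof. by rewrite /OR den_NZ den_ADD => -> ->; case: x; case: y. Qed.
Lemma den_ITE c a b : D (ITE c a b) = if D c != 0 then D a else D b.
Proof. rewrite /ITE den_ADD !den_MUL den_NZ den_ISZ; case: (D c) => /= *; lia. Qed.
Lemma den_BSum n b : D (BSum n b) = bsum (D n) (fun i => den o (i :: env) b).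
Proof. by []. Qed.
Lemma den_Let a b : D (Let a b) = den o (D a :: env) b.
Proof. by []. Qed.
End Macros.

Section Macros2.
Variable o : nat -> nat.
Variable env : seq nat.
Local Notation D := (den o env).
Lemma den_BALL n b (p : nat -> bool) : (forall i, den o (i :: env) b = p i) ->
  D (BALL n b) = all p (iota 0 (D n)).
Proof.
move=> H; rewrite /BALL den_ISZ den_BSum (@bsum_ext _ _ (fun i => ~~ p i)) => [|i _]; last first.
  by rewrite den_ISZ H; case: (p i).
by rewrite bsum_neg_eq0.
Qed.
Lemma den_BEX n b (p : nat -> bool) : (forall i, den o (i :: env) b = p i) ->
  D (BEX n b) = has p (iota 0 (D n)).
Proof.
move=> H; rewrite /BEX den_NZ den_BSum (@bsum_ext _ _ (fun i => p i)) => [|i _]; last first.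
  by rewrite den_NZ H; case: (p i).
by rewrite bsum_pos_neq0.
Qed.
End Macros2.

Definition triN s := bsum s (fun i => i.+1).
Definition diagN z := bsum z.+1 (fun i => triN i.+1 <= z).
Definition p1N z := z - triN (diagN z).
Definition p2N z := diagN z - p1N z.
Definition pairN a b := triN (a + b) + a.

Lemma triS s : triN s.+1 = triN s + s.+1. Proof. by []. Qed.
Lemma tri_ge s : s <= triN s.
Proof. elim: s => // s IH; rewrite triS; lia. Qed.
Lemma tri_mono s t : s <= t -> triN s <= triN t.
Proof.
move=> H; rewrite -(subnKC H); elim: (t - s) => [|k IH]; first by rewrite addn0.
rewrite addnS triS; lia.
Qed.

Lemma bsum_lt n d : bsum n (fun i => i < d) = minn n d.
Proof. elim: n => [|n IH]; first by rewrite min0n. rewrite [bsum n.+1 _]/= IH; case: ltnP => H; lia. Qed.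

Lemma diag_eq d z : triN d <= z < triN d.+1 -> diagN z = d.
Proof.
move=> /andP [H1 H2].
rewrite /diagN (@bsum_ext _ _ (fun i => i < d)) ?bsum_lt.
  have := tri_ge d; lia.
move=> i _; case: ltnP => Hi.
- have := @tri_mono i.+1 d Hi; lia.
- have := @tri_mono d.+1 i.+1 Hi; lia.
Qed.

Lemma diag_exists z : exists d, triN d <= z < triN d.+1.
Proof.
elim: z => [|z [d /andP [H1 H2]]]; first by exists 0.
case: (ltnP z.+1 (triN d.+1)) => H3; first by exists d; rewrite H3; lia.
exists d.+1; rewrite [triN d.+2]triS; lia.
Qed.

Lemma pairK1 a b : p1N (pairN a b) = a.
Proof.
rewrite /p1N (@diag_eq (a + b)) /pairN; first lia.
rewrite triS; lia.
Qed.
Lemma pairK2 a b : p2N (pairN a b) = b.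
Proof.
rewrite /p2N pairK1 (@diag_eq (a + b)) /pairN; first lia.
rewrite triS; lia.
Qed.
Lemma pair_surj z : pairN (p1N z) (p2N z) = z.
Proof.
have [d Hd] := diag_exists z; have Hd' := Hd; move: Hd' => /andP [H1 H2].
rewrite triS in H2.
rewrite /p2N /p1N (diag_eq Hd) /pairN.
have ->: z - triN d + (d - (z - triN d)) = d by lia.
lia.
Qed.
Lemma pair_ge1 a b : a <= pairN a b.
Proof. rewrite /pairN; lia. Qed.
Lemma pair_ge2 a b : b <= pairN a b.
Proof. rewrite /pairN; have := tri_ge (a + b); lia. Qed.
Lemma p2_le z : p2N z <= z.
Proof. by rewrite -{2}(pair_surj z) pair_ge2. Qed.
Lemma p1_le z : p1N z <= z.
Proof. by rewrite -{2}(pair_surj z) pair_ge1. Qed.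
Lemma pair00 : pairN 0 0 = 0. Proof. by []. Qed.
Lemma p1N0 : p1N 0 = 0. Proof. by rewrite -pair00 pairK1. Qed.
Lemma p2N0 : p2N 0 = 0. Proof. by rewrite -pair00 pairK2. Qed.

Definition consN x l := (pairN x l).+1.
Definition hdN l := p1N l.-1.
Definition tlN l := p2N l.-1.
Definition encl (s : seq nat) := foldr consN 0 s.
Definition tlsN n l := iter n tlN l.
Definition nthN l i := hdN (tlsN i l).
Definition lenN l := bsum l (fun i => tlsN i l != 0).

Lemma hd_cons x l : hdN (consN x l) = x. Proof. by rewrite /hdN /consN /= pairK1. Qed.
Lemma tl_cons x l : tlN (consN x l) = l. Proof. by rewrite /tlN /consN /= pairK2. Qed.
Lemma tl_encl s : tlN (encl s) = encl (behead s).
Proof. by case: s => [|x s] /=; [rewrite /tlN p2N0|rewrite tl_cons]. Qed.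
Lemma tls_encl i s : tlsN i (encl s) = encl (drop i s).
Proof.
elim: i s => [|i IH] s; first by rewrite drop0.
by rewrite /tlsN iterSr -/(tlsN _ _) tl_encl IH -drop1 drop_drop addn1.
Qed.
Lemma nth_encl s i : nthN (encl s) i = nth 0 s i.
Proof.
rewrite /nthN tls_encl; have := nth_drop i 0 s 0; rewrite addn0 => <-.
case: (drop i s) => [|x r] /=; [by rewrite /hdN p1N0|by rewrite hd_cons].
Qed.
Lemma size_le_encl s : size s <= encl s.
Proof. elim: s => //= x s IH; rewrite /consN; have := pair_ge2 x (encl s); lia. Qed.
Lemma encl_eq0 s : (encl s == 0) = (s == [::]).
Proof. by case: s. Qed.
Lemma len_encl s : lenN (encl s) = size s.
Proof.
rewrite /lenN (@bsum_ext _ _ (fun i => i < size s)) ?bsum_lt.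
  by have := size_le_encl s; lia.
move=> i _; by rewrite tls_encl encl_eq0 -size_eq0 size_drop subn_eq0 -ltnNge.
Qed.
Lemma encl_surj l : exists s, encl s = l.
Proof.
elim/ltn_ind: l => -[|z] IH; first by exists [::].
have [s Hs] := IH (p2N z) (leq_ltn_trans (p2_le z) (ltnSn z)).
exists (p1N z :: s); by rewrite /= Hs /consN pair_surj.
Qed.

Definition TRI s := BSum s (Suc (Var 0)).
Definition DIAG z := BSum (Suc z) (LEB (TRI (Suc (Var 0))) (liftp 0 z)).
Definition P1 z := Let z (SUB (Var 0) (TRI (DIAG (Var 0)))).
Definition P2 z := Let z (SUB (DIAG (Var 0)) (P1 (Var 0))).
Definition PAIR a b := ADD (TRI (ADD a b)) a.
Definition CONS x l := Suc (PAIR x l).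
Definition HD l := P1 (Prd l).
Definition TL l := P2 (Prd l).
Definition TLS n l := Iter n (TL (Var 0)) l.
Definition NTH l i := HD (TLS i l).
Definition LEN l := Let l (BSum (Var 0) (NZ (TLS (Var 0) (Var 1)))).
Arguments TRI : simpl never. Arguments DIAG : simpl never. Arguments P1 : simpl never.
Arguments P2 : simpl never. Arguments PAIR : simpl never. Arguments CONS : simpl never.
Arguments HD : simpl never. Arguments TL : simpl never. Arguments TLS : simpl never.
Arguments NTH : simpl never. Arguments LEN : simpl never.

Section DenL.
Variable o : nat -> nat.
Local Notation D env := (den o env).

Lemma den_Var env j : D env (Var j) = nth 0 env j. Proof. by []. Qed.
Lemma den_Cst env n : D env (Cst n) = n. Proof. by []. Qed.
Lemma den_Suc env a : D env (Suc a) = (D env a).+1. Proof. by []. Qed.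
Lemma den_Prd env a : D env (Prd a) = (D env a).-1. Proof. by []. Qed.
Lemma den_Orc env a : D env (Orc a) = o (D env a). Proof. by []. Qed.
Lemma den_Iter env n g x : D env (Iter n g x) = iter (D env n) (fun acc => D (acc :: env) g) (D env x).
Proof. by []. Qed.

Lemma den_TRI env s : D env (TRI s) = triN (D env s).
Proof. by rewrite /TRI den_BSum. Qed.
Lemma den_DIAG env z : D env (DIAG z) = diagN (D env z).
Proof.
rewrite /DIAG den_BSum /diagN den_Suc; apply: bsum_ext => i _.
by rewrite den_LEB den_TRI den_lift0.
Qed.
Lemma den_P1 env z : D env (P1 z) = p1N (D env z).
Proof. by rewrite /P1 den_Let den_SUB den_TRI den_DIAG. Qed.
Lemma den_P2 env z : D env (P2 z) = p2N (D env z).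
Proof. by rewrite /P2 den_Let den_SUB den_DIAG den_P1. Qed.
Lemma den_PAIR env a b : D env (PAIR a b) = pairN (D env a) (D env b).
Proof. by rewrite /PAIR den_ADD den_TRI den_ADD. Qed.
Lemma den_CONS env a b : D env (CONS a b) = consN (D env a) (D env b).
Proof. by rewrite /CONS den_Suc den_PAIR. Qed.
Lemma den_HD env l : D env (HD l) = hdN (D env l).
Proof. by rewrite /HD den_P1. Qed.
Lemma den_TL env l : D env (TL l) = tlN (D env l).
Proof. by rewrite /TL den_P2. Qed.
Lemma den_TLS env n l : D env (TLS n l) = tlsN (D env n) (D env l).
Proof. by rewrite /TLS den_Iter; apply: iter_ext => y; rewrite den_TL. Qed.
Lemma den_NTH env l i : D env (NTH l i) = nthN (D env l) (D env i).
Proof. by rewrite /NTH den_HD den_TLS. Qed.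
Lemma den_LEN env l : D env (LEN l) = lenN (D env l).
Proof.
rewrite /LEN den_Let den_BSum; apply: bsum_ext => i _.
by rewrite den_NZ den_TLS.
Qed.
End DenL.

Fixpoint enc (c : code) : nat :=
  match c with
  | cZero => pairN 0 0
  | cSucc => pairN 1 0
  | cProj i => pairN 2 i
  | cOracle => pairN 3 0
  | cComp g hs => pairN 4 (pairN (enc g) (encl (map enc hs)))
  | cPrec b s => pairN 5 (pairN (enc b) (enc s))
  | cMu g => pairN 6 (enc g)
  end.

Definition eC e := p1N e.
Definition eA e := p1N (p2N e).
Definition eV e := p1N (p2N (p2N e)).
Definition eW e := p2N (p2N (p2N e)).
Definition entN c a v w := pairN c (pairN a (pairN v w)).

Lemma entK c a v w : [/\ eC (entN c a v w) = c, eA (entN c a v w) = a,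
   eV (entN c a v w) = v & eW (entN c a v w) = w].
Proof. by rewrite /eC /eA /eV /eW /entN !pairK2 !pairK1. Qed.

Definition memN T C A V := has (fun j => let e := nthN T j in
  [&& eC e == C, eA e == A & eV e == V]) (iota 0 (lenN T)).
Definition memPN T C A := has (fun j => let e := nthN T j in
  [&& eC e == C, eA e == A & 0 < eV e]) (iota 0 (lenN T)).

Definition JNb (o : nat -> nat) T bd t w v a c :=
  [|| (t == 0) && (v == 0),
      (t == 1) && ((a != 0) && (v == (hdN a).+1)),
      (t == 2) && ((bd < lenN a) && (v == nthN a bd)),
      (t == 3) && ((a != 0) && (v == o (hdN a))),
      (t == 4) && ((lenN w == lenN (p2N bd)) &&
         (all (fun idx => memN T (nthN (p2N bd) idx) a (nthN w idx)) (iota 0 (lenN (p2N bd)))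
          && memN T (p1N bd) w v)),
      (t == 5) && ((a != 0) && (if hdN a == 0 then memN T (p1N bd) (tlN a) v
                    else memN T c (consN (hdN a).-1 (tlN a)) w &&
                         memN T (p2N bd) (consN (hdN a).-1 (consN w (tlN a))) v))
    | (t == 6) && (memN T bd (consN v a) 0 &&
         all (fun m => memPN T bd (consN m a)) (iota 0 v))].

Definition JN o T e := JNb o T (p2N (eC e)) (p1N (eC e)) (eW e) (eV e) (eA e) (eC e).

Definition okN o T := all (fun i => JN o T (nthN T i)) (iota 0 (lenN T)).

Notation L1 e := (liftp 0 e).

Definition MEM T C A V := BEX (LEN T) (Let (NTH (L1 T) (Var 0))
  (AND (EQB (P1 (Var 0)) (L1 (L1 C)))
   (AND (EQB (P1 (P2 (Var 0))) (L1 (L1 A))) (EQB (P1 (P2 (P2 (Var 0)))) (L1 (L1 V)))))).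
Definition MEMP T C A := BEX (LEN T) (Let (NTH (L1 T) (Var 0))
  (AND (EQB (P1 (Var 0)) (L1 (L1 C)))
   (AND (EQB (P1 (P2 (Var 0))) (L1 (L1 A))) (LTB (Cst 0) (P1 (P2 (P2 (Var 0)))))))).
Arguments MEM : simpl never. Arguments MEMP : simpl never.

Lemma nb_mul (x y : bool) : nat_of_bool x * nat_of_bool y = x && y.
Proof. by case: x; case: y. Qed.
Lemma nb_or (x y : bool) : (nat_of_bool x + nat_of_bool y != 0) = x || y.
Proof. by case: x; case: y. Qed.
Lemma nb_neq0 (x : bool) : (nat_of_bool x != 0) = x.
Proof. by case: x. Qed.

Section DenC.
Variable o : nat -> nat.
Local Notation D env := (den o env).

Lemma den_AND' env a b : D env (AND a b) = D env a * D env b.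
Proof. by rewrite /AND den_MUL. Qed.
Lemma den_OR' env a b : D env (OR a b) = (D env a + D env b != 0).
Proof. by rewrite /OR den_NZ den_ADD. Qed.

Lemma den_MEM env T C A V : D env (MEM T C A V) = memN (D env T) (D env C) (D env A) (D env V).
Proof.
rewrite /MEM (@den_BEX o env _ _ (fun j => let e := nthN (D env T) j in
  [&& eC e == D env C, eA e == D env A & eV e == D env V])) ?den_LEN // => i.
by rewrite den_Let den_NTH !den_lift0 !den_AND' !den_EQB !den_P1 !den_P2 !den_lift0 !nb_mul.
Qed.
Lemma den_MEMP env T C A : D env (MEMP T C A) = memPN (D env T) (D env C) (D env A).
Proof.
rewrite /MEMP (@den_BEX o env _ _ (fun j => let e := nthN (D env T) j in
  [&& eC e == D env C, eA e == D env A & 0 < eV e])) ?den_LEN // => i.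
by rewrite den_Let den_NTH !den_lift0 !den_AND' !den_EQB den_LTB !den_P1 !den_P2 !den_lift0 !nb_mul.
Qed.

Lemma den_V0 env x : D (x :: env) (Var 0) = x. Proof. by []. Qed.
Lemma den_VS env x j : D (x :: env) (Var j.+1) = D env (Var j). Proof. by []. Qed.

Definition BODY T6 :=
  let bd := Var 0 in let t := Var 1 in let w := Var 2 in let v := Var 3 in
  let a := Var 4 in let c := Var 5 in
  OR (AND (EQB t (Cst 0)) (EQB v (Cst 0)))
 (OR (AND (EQB t (Cst 1)) (AND (NZ a) (EQB v (Suc (HD a)))))
 (OR (AND (EQB t (Cst 2)) (AND (LTB bd (LEN a)) (EQB v (NTH a bd))))
 (OR (AND (EQB t (Cst 3)) (AND (NZ a) (EQB v (Orc (HD a)))))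
 (OR (AND (EQB t (Cst 4)) (AND (EQB (LEN w) (LEN (P2 bd)))
        (AND (BALL (LEN (P2 bd)) (MEM (L1 T6) (NTH (P2 (Var 1)) (Var 0)) (Var 5) (NTH (Var 3) (Var 0))))
             (MEM T6 (P1 bd) w v))))
 (OR (AND (EQB t (Cst 5)) (AND (NZ a) (ITE (EQB (HD a) (Cst 0)) (MEM T6 (P1 bd) (TL a) v)
        (AND (MEM T6 c (CONS (Prd (HD a)) (TL a)) w)
             (MEM T6 (P2 bd) (CONS (Prd (HD a)) (CONS w (TL a))) v)))))
     (AND (EQB t (Cst 6)) (AND (MEM T6 bd (CONS v a) (Cst 0))
        (BALL v (MEMP (L1 T6) (Var 1) (CONS (Var 0) (Var 5))))))))))).

Lemma den_BODY env T bd t w v a c :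
  D [:: bd, t, w, v, a, c & env] (BODY (L1 (L1 (L1 (L1 (L1 (L1 T))))))) = JNb o (D env T) bd t w v a c.
Proof.
rewrite /BODY !den_OR' !den_AND'.
rewrite (@den_BALL o _ _ _ (fun idx => memN (D env T) (nthN (p2N bd) idx) a (nthN w idx))); last first.
  by move=> i; rewrite den_MEM !den_lift0 !den_NTH !den_P2 !den_Var.
rewrite (@den_BALL o _ _ _ (fun m => memPN (D env T) bd (consN m a))); last first.
  by move=> i; rewrite den_MEMP !den_lift0 !den_CONS !den_Var.
rewrite den_ITE !den_AND'.
do 4 rewrite ?den_MEM ?den_lift0 ?den_EQB ?den_NZ ?den_LTB ?den_LEN ?den_NTH ?den_P1 ?den_P2
  ?den_HD ?den_TL ?den_CONS ?den_Prd ?den_HD ?den_Suc ?den_Orc ?den_V0 ?den_VS ?den_Cst.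
rewrite !nb_mul !nb_or !nb_neq0 /JNb.
rewrite /hdN /tlN; case: (p1N a.-1 == 0); by rewrite ?nb_mul ?nb_or.

Qed.

Definition JNpe T e :=
  Let (P1 e) (Let (P1 (P2 (L1 e))) (Let (P1 (P2 (P2 (L1 (L1 e)))))
  (Let (P2 (P2 (P2 (L1 (L1 (L1 e)))))) (Let (P1 (Var 3)) (Let (P2 (Var 4))
  (BODY (L1 (L1 (L1 (L1 (L1 (L1 T)))))))))))).

Lemma den_JNpe env T e : D env (JNpe T e) = JN o (D env T) (D env e).
Proof.
rewrite /JNpe; do 6 (rewrite den_Let; rewrite ?den_P1 ?den_P2 ?den_lift0 ?den_V0 ?den_VS ?den_P1 ?den_P2 ?den_lift0). rewrite den_BODY.
by [].
Qed.

Definition OKpe T := BALL (LEN T) (JNpe (L1 T) (NTH (L1 T) (Var 0))).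
Lemma den_OKpe env T : D env (OKpe T) = okN o (D env T).
Proof.
rewrite /OKpe (@den_BALL o _ _ _ (fun i => JN o (D env T) (nthN (D env T) i))) ?den_LEN //.
by move=> i; rewrite den_JNpe den_NTH !den_lift0 den_Var.
Qed.
End DenC.

Lemma foldr_all (P : code -> Prop) hs : foldr (fun x acc => P x /\ acc) True hs ->
  forall i, i < size hs -> P (nth cZero hs i).
Proof.
elim: hs => //= h hs IH [Ph Phs] [|i] Hi //=; apply: IH => //.
Qed.

Lemma evals_nth f hs args ys : size ys = size hs ->
  (forall i, i < size hs -> eval f (nth cZero hs i) args (nth 0 ys i)) -> evals f hs args ys.
Proof.
elim: hs ys => [|h hs IH] [|y ys] //= Hs H; first exact: evs_nil.
apply: evs_cons; first exact: (H 0).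
apply: IH; first by case: Hs.
by move=> i Hi; apply: (H i.+1).
Qed.

Lemma memN_J o T C A V : okN o T -> memN T C A V -> exists w, JNb o T (p2N C) (p1N C) w V A C.
Proof.
move=> Hok /hasP [j Hj /and3P [HC HA HV]].
move/allP: Hok => /(_ j Hj); rewrite /JN (eqP HC) (eqP HA) (eqP HV) => H; by exists (eW (nthN T j)).
Qed.

Lemma memPN_mem T C A : memPN T C A -> exists V, 0 < V /\ memN T C A V.
Proof.
move/hasP => [j Hj /and3P [HC HA HV]]; exists (eV (nthN T j)); split => //.
by apply/hasP; exists j => //=; rewrite HC HA eqxx.
Qed.

Lemma encl_cons0 s : (encl s != 0) -> exists x r, s = x :: r.
Proof. by case: s => // x r _; exists x, r. Qed.

Definition tagc c := match c with cZero => 0 | cSucc => 1 | cProj _ => 2 | cOracle => 3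
  | cComp _ _ => 4 | cPrec _ _ => 5 | cMu _ => 6 end.
Definition bodyc c := match c with cProj i => i | cComp g hs => pairN (enc g) (encl (map enc hs))
  | cPrec b s => pairN (enc b) (enc s) | cMu g => enc g | _ => 0 end.
Lemma enc_p1 c : p1N (enc c) = tagc c. Proof. case: c => *; exact: pairK1. Qed.
Lemma enc_p2 c : p2N (enc c) = bodyc c. Proof. case: c => *; exact: pairK2. Qed.

Section Sound.
Variable o : nat -> nat.
Variable T : nat.
Hypothesis Hok : okN o T.

Lemma sound c : forall args v, memN T (enc c) (encl args) v -> eval (tot o) c args v.
Proof.
elim/code_ind2: c.
- move=> args v /(memN_J Hok) [w]; rewrite /JNb enc_p1 enc_p2 /= ?orbF => /eqP ->; exact: ev_zero.
- move=> args v /(memN_J Hok) [w]; rewrite /JNb enc_p1 enc_p2 /= ?orbF => /andP [Ha /eqP ->].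
  have [x [r E]] := encl_cons0 Ha; subst; rewrite /= hd_cons; exact: ev_succ.
- move=> i args v /(memN_J Hok) [w]; rewrite /JNb enc_p1 enc_p2 /= ?orbF => /andP [Hi /eqP ->].
  rewrite len_encl in Hi; rewrite nth_encl; exact: ev_proj.
- move=> args v /(memN_J Hok) [w]; rewrite /JNb enc_p1 enc_p2 /= ?orbF => /andP [Ha /eqP ->].
  have [x [r E]] := encl_cons0 Ha; subst; rewrite /= hd_cons; exact: ev_oracle.
- move=> g hs IHg IHhs args v /(memN_J Hok) [w]; rewrite /JNb enc_p1 enc_p2 /= ?orbF.
  rewrite pairK2 pairK1 => /and3P [/eqP Hl /allP Hall Hg].
  have [ys Ew] := encl_surj w; subst w.
  rewrite !len_encl size_map in Hl Hall.
  apply: (@ev_comp _ g hs args ys v); last exact: IHg.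
  apply: evals_nth => // i Hi.
  have := Hall i; rewrite mem_iota add0n => /(_ Hi).
  rewrite !nth_encl (nth_map cZero) // => Hm.
  exact: (foldr_all IHhs Hi).
- move=> b s IHb IHs args v Hm.
  have [w0] := memN_J Hok Hm; rewrite /JNb enc_p1 enc_p2 /= ?orbF => /andP [Ha _].
  have [n [r E]] := encl_cons0 Ha; subst args.
  elim: n r v Hm {Ha w0} => [|n IHn] r v /(memN_J Hok) [w]; rewrite /JNb enc_p1 enc_p2 /= ?orbF;
    rewrite hd_cons tl_cons /= => H.
  + rewrite pairK1 in H; apply: ev_prec0; exact: IHb.
  + rewrite pairK2 in H; case/andP: H => H1 H2.
    apply: ev_precS; [exact: (IHn r w H1) | exact: (IHs (n :: w :: r) v H2)].
- move=> g IHg args v /(memN_J Hok) [w]; rewrite /JNb enc_p1 enc_p2 /= ?orbF => /andP [H0 /allP Hall].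
  apply: ev_mu; first exact: (IHg (v :: args)).
  move=> m Hm; have := Hall m; rewrite mem_iota add0n => /(_ Hm) /memPN_mem [V [HV HmV]].
  exists V.-1; rewrite prednK //; exact: (IHg (m :: args)).
Qed.
End Sound.

Lemma memN_encl L C A V : memN (encl L) C A V =
  has (fun e => [&& eC e == C, eA e == A & eV e == V]) L.
Proof.
rewrite /memN len_encl -[in RHS](mkseq_nth 0 L) has_map; apply: eq_has => j /=.
by rewrite nth_encl.
Qed.
Lemma memPN_encl L C A : memPN (encl L) C A =
  has (fun e => [&& eC e == C, eA e == A & 0 < eV e]) L.
Proof.
rewrite /memPN len_encl -[in RHS](mkseq_nth 0 L) has_map; apply: eq_has => j /=.
by rewrite nth_encl.
Qed.
Lemma okN_encl o L : okN o (encl L) = all (JN o (encl L)) L.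
Proof.
rewrite /okN len_encl; move: (encl L) (nth_encl L) => T HT.
rewrite -[in RHS](mkseq_nth 0 L) all_map; apply: eq_all => j /=.
by rewrite HT.
Qed.

Lemma JNb_mono o T T' bd t w v a c :
  (forall C A V, memN T C A V -> memN T' C A V) -> (forall C A, memPN T C A -> memPN T' C A) ->
  JNb o T bd t w v a c -> JNb o T' bd t w v a c.
Proof.
move=> Hm Hp; rewrite /JNb.
case/orP=> [H|]; first by rewrite H.
case/orP=> [H|]; first by rewrite H ?orbT.
case/orP=> [H|]; first by rewrite H ?orbT.
case/orP=> [H|]; first by rewrite H ?orbT.
case/orP=> [H|].
  case/andP: H => H1 /andP [H2 /andP [H3 H4]].
  do 4 (apply/orP; right); apply/orP; left.
  rewrite H1 H2 /=; apply/andP; split; last exact: Hm.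
  apply/allP => i Hi; apply: Hm; exact: (allP H3 i Hi).
case/orP=> [H|H].
  case/andP: H => H1 /andP [H2 H3].
  do 5 (apply/orP; right); apply/orP; left.
  rewrite H1 H2 /=; move: H3; case: (_ == 0); first exact: Hm.
  by case/andP => *; apply/andP; split; apply: Hm.
do 6 (apply/orP; right).
case/andP: H => H1 /andP [H2 H3]; rewrite H1 /=; apply/andP; split; first exact: Hm.
apply/allP => i Hi; apply: Hp; exact: (allP H3 i Hi).
Qed.

Lemma JNb0 o T bd w v a c : JNb o T bd 0 w v a c = (v == 0).
Proof. by rewrite /JNb /= ?orbF. Qed.
Lemma JNb1 o T bd w v a c : JNb o T bd 1 w v a c = (a != 0) && (v == (hdN a).+1).
Proof. by rewrite /JNb /= ?orbF. Qed.
Lemma JNb2 o T bd w v a c : JNb o T bd 2 w v a c = (bd < lenN a) && (v == nthN a bd).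
Proof. by rewrite /JNb /= ?orbF. Qed.
Lemma JNb3 o T bd w v a c : JNb o T bd 3 w v a c = (a != 0) && (v == o (hdN a)).
Proof. by rewrite /JNb /= ?orbF. Qed.
Lemma JNb4 o T bd w v a c : JNb o T bd 4 w v a c = (lenN w == lenN (p2N bd)) &&
         (all (fun idx => memN T (nthN (p2N bd) idx) a (nthN w idx)) (iota 0 (lenN (p2N bd)))
          && memN T (p1N bd) w v).
Proof. by rewrite /JNb /= ?orbF. Qed.
Lemma JNb5 o T bd w v a c : JNb o T bd 5 w v a c = (a != 0) && (if hdN a == 0 then memN T (p1N bd) (tlN a) v
                    else memN T c (consN (hdN a).-1 (tlN a)) w &&
                         memN T (p2N bd) (consN (hdN a).-1 (consN w (tlN a))) v).
Proof. by rewrite /JNb /= ?orbF. Qed.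
Lemma JNb6 o T bd w v a c : JNb o T bd 6 w v a c = memN T bd (consN v a) 0 &&
         all (fun m => memPN T bd (consN m a)) (iota 0 v).
Proof. by rewrite /JNb /= ?orbF. Qed.
Lemma all_cons' (T : Type) (p : pred T) x s : all p (x :: s) = p x && all p s. Proof. by []. Qed.
Lemma has_cons' (T : Type) (p : pred T) x s : has p (x :: s) = p x || has p s. Proof. by []. Qed.
Lemma consN_neq0 x l : (consN x l != 0). Proof. by []. Qed.
Lemma encl_cons x s : encl (x :: s) = consN x (encl s). Proof. by []. Qed.

Lemma JN_ent o T c a v w : JN o T (entN c a v w) = JNb o T (p2N c) (p1N c) w v a c.
Proof. by rewrite /JN; case: (entK c a v w) => -> -> -> ->. Qed.

Section Complete.
Variable o : nat -> nat.
Definition ok L := okN o (encl L).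
Definition memL L C A V := memN (encl L) C A V.

Lemma memL_sub L L' C A V : {subset L <= L'} -> memL L C A V -> memL L' C A V.
Proof. rewrite /memL !memN_encl => Hs /hasP [e /Hs He H]; apply/hasP; by exists e. Qed.
Lemma memPL_sub L L' C A : {subset L <= L'} -> memPN (encl L) C A -> memPN (encl L') C A.
Proof. rewrite !memPN_encl => Hs /hasP [e /Hs He H]; apply/hasP; by exists e. Qed.
Lemma JN_sub L L' e : {subset L <= L'} -> JN o (encl L) e -> JN o (encl L') e.
Proof.
move=> Hs; apply: JNb_mono => *; [exact: memL_sub Hs _|exact: memPL_sub Hs _].
Qed.
Lemma ok_app L1 L2 : ok L1 -> ok L2 -> ok (L1 ++ L2).
Proof.
rewrite /ok !okN_encl all_cat => /allP H1 /allP H2; apply/andP; split; apply/allP => e He.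
- by apply: (JN_sub _ (H1 e He)) => x Hx; rewrite mem_cat Hx.
- by apply: (JN_sub _ (H2 e He)) => x Hx; rewrite mem_cat Hx orbT.
Qed.
Lemma ok_cons e L : JN o (encl (e :: L)) e -> ok L -> ok (e :: L).
Proof.
rewrite /ok !okN_encl all_cons' => -> /allP H; apply/allP => x Hx.
by apply: (JN_sub _ (H x Hx)) => y Hy; rewrite inE Hy orbT.
Qed.
Lemma memL_head c a v w L : memL (entN c a v w :: L) c a v.
Proof. by rewrite /memL memN_encl has_cons'; case: (entK c a v w) => -> -> -> _; rewrite !eqxx. Qed.

Lemma memL_pos L C A k : memL L C A k.+1 -> memPN (encl L) C A.
Proof.
rewrite /memL memN_encl memPN_encl => /hasP [e He /and3P [H1 H2 /eqP H3]].
by apply/hasP; exists e => //; rewrite H1 H2 H3.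
Qed.

Lemma sub_l (L1 L2 : seq nat) : {subset L1 <= L1 ++ L2}.
Proof. by move=> x Hx; rewrite mem_cat Hx. Qed.
Lemma sub_r (L1 L2 : seq nat) : {subset L2 <= L1 ++ L2}.
Proof. by move=> x Hx; rewrite mem_cat Hx orbT. Qed.
Lemma sub_c e (L : seq nat) : {subset L <= e :: L}.
Proof. by move=> x Hx; rewrite inE Hx orbT. Qed.

Lemma collect n (P : nat -> seq nat -> Prop) :
  (forall m L L', {subset L <= L'} -> P m L -> P m L') ->
  (forall m, m < n -> exists L, ok L /\ P m L) -> exists L, ok L /\ forall m, m < n -> P m L.
Proof.
move=> Hmono; elim: n => [|n IH] H; first by exists [::]; split => //; rewrite /ok okN_encl.
have [L1 [H1 P1]] := IH (fun m Hm => H m (ltnW Hm)).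
have [L2 [H2 P2]] := H n (ltnSn n).
exists (L1 ++ L2); split; first exact: ok_app.
move=> m; rewrite ltnS leq_eqVlt => /orP [/eqP ->|Hm].
- exact: (@Hmono n L2 (L1 ++ L2) (@sub_r L1 L2) P2).
- exact: (@Hmono m L1 (L1 ++ L2) (@sub_l L1 L2) (P1 _ Hm)).
Qed.

Lemma complete c args v : eval (tot o) c args v -> exists L, ok L /\ memL L (enc c) (encl args) v.
Proof.
move=> H; pattern c, args, v; revert c args v H.
apply: (@eval_ind' (tot o) _ (fun hs args ys => size ys = size hs /\ exists L, ok L /\
  forall i, i < size hs -> memL L (enc (nth cZero hs i)) (encl args) (nth 0 ys i))).
- move=> args; exists [:: entN (enc cZero) (encl args) 0 0]; split; last exact: memL_head.
  apply: ok_cons; last by rewrite /ok okN_encl.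
  by rewrite JN_ent enc_p1 JNb0.
- move=> x args; exists [:: entN (enc cSucc) (encl (x :: args)) x.+1 0]; split; last exact: memL_head.
  apply: ok_cons; last by rewrite /ok okN_encl.
  by rewrite JN_ent; rewrite enc_p1 enc_p2 JNb1 encl_cons hd_cons eqxx consN_neq0.
- move=> i args Hi; exists [:: entN (enc (cProj i)) (encl args) (nth 0 args i) 0]; split; last exact: memL_head.
  apply: ok_cons; last by rewrite /ok okN_encl.
  by rewrite JN_ent; rewrite enc_p1 enc_p2 JNb2 len_encl nth_encl Hi eqxx.
- move=> x args v [<-]; exists [:: entN (enc cOracle) (encl (x :: args)) (o x) 0]; split; last exact: memL_head.
  apply: ok_cons; last by rewrite /ok okN_encl.
  by rewrite JN_ent; rewrite enc_p1 enc_p2 JNb3 encl_cons hd_cons eqxx consN_neq0.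
- move=> g hs args ys v _ [Hsz [L1 [H1 P1]]] _ [L2 [H2 P2]].
  set e := entN (enc (cComp g hs)) (encl args) v (encl ys).
  exists (e :: L1 ++ L2); split; last exact: memL_head.
  apply: ok_cons; last exact: ok_app.
  rewrite JN_ent; rewrite enc_p1 enc_p2 JNb4.
  rewrite [bodyc _]/= pairK1 pairK2 !len_encl size_map Hsz eqxx andTb.
  apply/andP; split.
  + apply/allP => i; rewrite mem_iota add0n => Hi.
    rewrite !nth_encl (nth_map cZero) //.
    apply: memL_sub (P1 i Hi) => x Hx; by rewrite inE mem_cat Hx orbT.
  + apply: memL_sub P2 => x Hx; by rewrite inE mem_cat Hx !orbT.
- move=> b s args v _ [L1 [H1 P1]].
  set e := entN (enc (cPrec b s)) (encl (0 :: args)) v 0.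
  exists (e :: L1); split; last exact: memL_head.
  apply: ok_cons => //.
  rewrite JN_ent; rewrite enc_p1 enc_p2 JNb5.
  rewrite encl_cons consN_neq0 hd_cons tl_cons eqxx andTb [bodyc _]/= pairK1.
  exact: (@memL_sub L1 (e :: L1) _ _ _ (@sub_c e L1) P1).
- move=> b s n args w v _ [L1 [H1 P1]] _ [L2 [H2 P2]].
  set e := entN (enc (cPrec b s)) (encl (n.+1 :: args)) v w.
  exists (e :: L1 ++ L2); split; last exact: memL_head.
  apply: ok_cons; last exact: ok_app.
  rewrite JN_ent; rewrite enc_p1 enc_p2 JNb5.
  rewrite encl_cons consN_neq0 hd_cons tl_cons andTb [bodyc _]/= pairK2 -[n.+1.-1]/n.
  apply/andP; split.
  + apply: memL_sub P1 => x Hx; by rewrite inE mem_cat Hx orbT.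
  + apply: memL_sub P2 => x Hx; by rewrite inE mem_cat Hx !orbT.
- move=> g n args _ [L0 [H0 P0]] Hm.
  have [Lc [Hc Pc]] := @collect n (fun m L => memPN (encl L) (enc g) (encl (m :: args)))
    (fun m L L' Hs H => memPL_sub Hs H)
    (fun m Hlt => match Hm m Hlt with ex_intro k (conj _ (ex_intro L (conj HL PL))) =>
       ex_intro _ L (conj HL (memL_pos PL)) end).
  set e := entN (enc (cMu g)) (encl args) n 0.
  exists (e :: L0 ++ Lc); split; last exact: memL_head.
  apply: ok_cons; last exact: ok_app.
  rewrite JN_ent; rewrite enc_p1 enc_p2 JNb6 [bodyc _]/=.
  apply/andP; split.
  + apply: memL_sub P0 => x Hx; by rewrite inE mem_cat Hx orbT.
  + apply/allP => m; rewrite mem_iota add0n => Hlt.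
    apply: memPL_sub (Pc m Hlt) => x Hx; by rewrite inE mem_cat Hx !orbT.
- move=> args; split => //; exists [::]; split => //; by rewrite /ok okN_encl.
- move=> h hs args y ys _ [L1 [H1 P1]] _ [Hsz [L2 [H2 P2]]].
  split; first by rewrite /= Hsz.
  exists (L1 ++ L2); split; first exact: ok_app.
  case=> [|i] Hi.
  + exact: (@memL_sub L1 (L1 ++ L2) _ _ _ (@sub_l L1 L2) P1).
  + exact: (@memL_sub L2 (L1 ++ L2) _ _ _ (@sub_r L1 L2) (P2 i Hi)).
Qed.
End Complete.

Section Inv.
Variable f : pfun.
Lemma comp_iff g hs args v : eval f (cComp g hs) args v <-> exists ys, evals f hs args ys /\ eval f g ys v.
Proof. split; [move=> H; inversion H; subst; by eauto | case=> ys [H1 H2]; exact: ev_comp H1 H2]. Qed.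
Lemma evals_nil_iff args ys : evals f [::] args ys <-> ys = [::].
Proof. split; [move=> H; by inversion H | move=> ->; exact: evs_nil]. Qed.
Lemma evals_cons_iff h hs args ys : evals f (h :: hs) args ys <->
  exists y ys', ys = y :: ys' /\ eval f h args y /\ evals f hs args ys'.
Proof.
split; [move=> H; inversion H; subst; by eauto
       | case=> y [ys' [-> [H1 H2]]]; exact: evs_cons].
Qed.
Lemma proj_iff i args v : eval f (cProj i) args v <-> i < size args /\ v = nth 0 args i.
Proof. split; [move=> H; by inversion H | case=> H ->; exact: ev_proj]. Qed.
Lemma prec0_iff b s args v : eval f (cPrec b s) (0 :: args) v <-> eval f b args v.
Proof. split; [move=> H; by inversion H | exact: ev_prec0]. Qed.
Lemma precS_iff b s n args v : eval f (cPrec b s) (n.+1 :: args) v <->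
  exists w, eval f (cPrec b s) (n :: args) w /\ eval f s (n :: w :: args) v.
Proof. split; [move=> H; inversion H; subst; by eauto | case=> w [H1 H2]; exact: ev_precS H1 H2]. Qed.
Lemma zero_iff args v : eval f cZero args v <-> v = 0.
Proof. split; [move=> H; by inversion H | move=> ->; exact: ev_zero]. Qed.
Lemma oracle_iff x args v : eval f cOracle (x :: args) v <-> f x = Some v.
Proof. split; [move=> H; by inversion H | exact: ev_oracle]. Qed.
Lemma succ_iff x args v : eval f cSucc (x :: args) v <-> v = x.+1.
Proof. split; [move=> H; by inversion H | move=> ->; exact: ev_succ]. Qed.
End Inv.

Fixpoint subst (c D : code) : code :=
  match c with
  | cOracle => cComp D [:: cProj 0]
  | cComp g hs => cComp (subst g D) (map (fun h => subst h D) hs)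
  | cPrec b s => cPrec (subst b D) (subst s D)
  | cMu g => cMu (subst g D)
  | c => c
  end.

Section Subst.
Variables (f g : pfun) (D : code).
Hypothesis HD : forall x v, g x = Some v <-> eval f D [:: x] v.

Lemma subst_fwd c args v : eval g c args v -> eval f (subst c D) args v.
Proof.
move=> H; pattern c, args, v; revert c args v H.
apply: (@eval_ind' g _ (fun hs args ys => evals f (map (fun h => subst h D) hs) args ys)) => /=.
- move=> *; exact: ev_zero.
- move=> *; exact: ev_succ.
- move=> *; exact: ev_proj.
- move=> x args v /HD Hx; apply: ev_comp Hx.
  apply: evs_cons; [exact: (@ev_proj _ 0 (x :: args))|exact: evs_nil].
- move=> *; apply: ev_comp; eassumption.
- move=> *; apply: ev_prec0; eassumption.
- move=> *; apply: ev_precS; eassumption.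
- move=> g0 n args _ H0 Hm; apply: ev_mu => // m Hlt.
  by case: (Hm m Hlt) => k [_ Hk]; exists k.
- move=> *; exact: evs_nil.
- move=> *; apply: evs_cons; eassumption.
Qed.

Lemma subst_bwd c' args v : eval f c' args v -> forall c, c' = subst c D -> eval g c args v.
Proof.
move=> H; pattern c', args, v; revert c' args v H.
apply: (@eval_ind' f _ (fun hs' args ys => forall hs, hs' = map (fun h => subst h D) hs ->
   evals g hs args ys)).
- by move=> args [] //= *; exact: ev_zero.
- by move=> x args [] //= *; exact: ev_succ.
- by move=> i args Hi [] //= j [<-]; exact: ev_proj.
- by move=> x args v Hx [].
- move=> g0 hs args ys v Hs IHs Hg IHg [] //=.
  + move=> [E1 E2]; subst g0 hs.
    move/evals_cons_iff: Hs => [y [ys' [Eys [/proj_iff [Hsz Ey] /evals_nil_iff Eys']]]]; subst.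
    case: args Hsz Hg {IHs IHg} => // x args _ /= Hg.
    by apply: ev_oracle; apply/HD.
  + move=> g1 hs1 [E1 E2]; apply: ev_comp; [exact: IHs | exact: IHg].
- by move=> b s args v Hb IHb [] //= b1 s1 [E1 E2]; apply: ev_prec0; apply: IHb.
- move=> b s n args w v H1 IH1 H2 IH2 [] //= b1 s1 [E1 E2]; apply: ev_precS.
  + by apply: IH1; rewrite /= E1 E2.
  + exact: IH2.
- move=> g0 n args H0 IH0 Hm [] //= g1 [E]; apply: ev_mu; first exact: IH0.
  by move=> m Hlt; case: (Hm m Hlt) => k [_ Hk]; exists k; apply: Hk.
- by move=> args [] //= _; exact: evs_nil.
- move=> h hs args y ys Hh IHh Hs IHs [] //= h1 hs1 [E1 E2].
  by apply: evs_cons; [exact: IHh | exact: IHs].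
Qed.

Lemma subst_eval c args v : eval g c args v <-> eval f (subst c D) args v.
Proof. split; [exact: subst_fwd | move=> H; exact: subst_bwd H _ erefl]. Qed.
End Subst.

Definition ODDpe := Iter (Var 0) (ISZ (Var 0)) (Cst 0).
Definition EVENpe := ISZ ODDpe.
Definition HALFpe := BSum (Var 0) ODDpe.
Definition ODDc := compile 1 ODDpe.
Definition EVENc := compile 1 EVENpe.
Definition HALFc := compile 1 HALFpe.

Lemma den_ODD o x env : den o (x :: env) ODDpe = odd x.
Proof.
rewrite /ODDpe den_Iter (@iter_ext _ _ _ (fun acc => nat_of_bool (acc == 0))) => [|y]; last by rewrite den_ISZ.
rewrite den_V0 den_Cst.
by elim: x => //= x ->; case: (odd x).
Qed.
Lemma den_EVEN o x env : den o (x :: env) EVENpe = ~~ odd x.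
Proof. by rewrite /EVENpe den_ISZ den_ODD; case: (odd x). Qed.
Lemma den_HALF o x env : den o (x :: env) HALFpe = x./2.
Proof.
rewrite /HALFpe den_BSum den_V0 (@bsum_ext _ _ (fun i => nat_of_bool (odd i))) => [|i _]; last by rewrite den_ODD.
elim: x => // x IH.
rewrite [bsum x.+1 _]/= IH; rewrite -[in RHS](odd_double_half x).
case: (odd x) => /=; rewrite add0n ?uphalf_double ?doubleK; lia.
Qed.

Section J.
Variable o : nat -> nat.
Local Notation ev := (eval (tot o)).

Lemma ODDc_ev x : ev ODDc [:: x] (odd x).
Proof. by rewrite -(den_ODD o x [::]); apply: (compileP o ODDpe [:: x]). Qed.
Lemma EVENc_ev x : ev EVENc [:: x] (~~ odd x).
Proof. by rewrite -(den_EVEN o x [::]); apply: (compileP o EVENpe [:: x]). Qed.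
Lemma HALFc_ev x : ev HALFc [:: x] x./2.
Proof. by rewrite -(den_HALF o x [::]); apply: (compileP o HALFpe [:: x]). Qed.

Definition LZ T Dc := cComp (cPrec cZero (cComp Dc [:: cProj 2])) [:: T; HALFc].

Lemma LZ_iff T Dc x v (tx : bool) : ev T [:: x] tx ->
  ev (LZ T Dc) [:: x] v <-> (if tx then ev Dc [:: x./2] v else v = 0).
Proof.
move=> HT; split.
- move/comp_iff => [ys [/evals_cons_iff [t [ys1 [-> [Ht /evals_cons_iff [h [ys2 [-> [Hh /evals_nil_iff ->]]]]]]]] Hp]].
  move: Hp; rewrite -(eval_det HT Ht) -(eval_det (HALFc_ev x) Hh) => Hp.
  case: tx HT Ht Hp => _ _.
  + move/precS_iff => [w [/prec0_iff /zero_iff -> /comp_iff [ys3 [H3 H4]]]].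
    move/evals_cons_iff: H3 => [y [ys4 [E1 [/proj_iff [_ /= E2] /evals_nil_iff E3]]]].
    by subst.
  + by move/prec0_iff/zero_iff.
- move=> H; apply/comp_iff; exists [:: nat_of_bool tx; x./2]; split.
  + apply: evs_cons; first exact: HT.
    apply: evs_cons; [exact: HALFc_ev | exact: evs_nil].
  case: tx H HT => H _.
  + apply/precS_iff; exists 0; split; first by apply/prec0_iff/zero_iff.
    apply/comp_iff; exists [:: x./2]; split => //.
    apply: evs_cons; [exact: (@ev_proj _ 2 [:: 0; 0; x./2]) | exact: evs_nil].
  + by subst; apply/prec0_iff/zero_iff.
Qed.

Definition Join dA dB := cComp addc [:: LZ ODDc dB; LZ EVENc dA].

Lemma Join_iff dA dB x v : ev (Join dA dB) [:: x] v <->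
  (if odd x then ev dB [:: x./2] v else ev dA [:: x./2] v).
Proof.
split.
- move/comp_iff => [ys [/evals_cons_iff [y1 [ys1 [-> [H1 /evals_cons_iff [y2 [ys2 [-> [H2 /evals_nil_iff ->]]]]]]]] Ha]].
  have E := eval_det (ev_addc o y1 y2 [::]) Ha; subst v.
  move/(LZ_iff _ _ (ODDc_ev x)): H1; move/(LZ_iff _ _ (EVENc_ev x)): H2.
  by case: (odd x) => /= [-> H|H ->]; rewrite ?addn0.
- move=> H; apply/comp_iff.
  case Ho: (odd x) H => H.
  + exists [:: v; 0]; split; last by have := ev_addc o v 0 [::]; rewrite addn0.
    apply: evs_cons; first by apply/(LZ_iff _ _ (ODDc_ev x)); rewrite Ho.
    apply: evs_cons; last exact: evs_nil.
    by apply/(LZ_iff _ _ (EVENc_ev x)); rewrite Ho.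
  + exists [:: 0; v]; split; last exact: ev_addc.
    apply: evs_cons; first by apply/(LZ_iff _ _ (ODDc_ev x)); rewrite Ho.
    apply: evs_cons; last exact: evs_nil.
    by apply/(LZ_iff _ _ (EVENc_ev x)); rewrite Ho.
Qed.

Lemma pjoin_iff gA gB dA dB :
  (forall x v, gA x = Some v <-> ev dA [:: x] v) ->
  (forall x v, gB x = Some v <-> ev dB [:: x] v) ->
  forall x v, pjoin gA gB x = Some v <-> ev (Join dA dB) [:: x] v.
Proof. by move=> HA HB x v; rewrite Join_iff /pjoin; case: (odd x). Qed.

Definition DIV := cMu cSucc.
Lemma DIV_never f args v : ~ eval f DIV args v.
Proof. move=> H; inversion H; subst. match goal with H0 : eval _ cSucc _ 0 |- _ => inversion H0 end. Qed.

Definition Gen (S : pfun) dS D :=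
  match S 0 with
  | Some e => match (unpickle e : option code) with Some c => subst c (Join dS D) | None => DIV end
  | None => DIV
  end.

Lemma Gen_spec S dS g D :
  (forall x v, S x = Some v <-> ev dS [:: x] v) ->
  (forall x v, g x = Some v <-> ev D [:: x] v) ->
  forall m v, appR S g m v <-> ev (Gen S dS D) [:: m] v.
Proof.
move=> HS Hg m v; rewrite /appR /Gen /Phi.
case HS0: (S 0) => [e|]; last first.
  by split => [[e [He _]] //|/DIV_never].
case Hu: (unpickle e) => [c|]; last first.
  by split => [[e' [[<-] ]]|/DIV_never]; rewrite ?Hu.
have HJ := pjoin_iff HS Hg.
split => [[e' [[<-] ]]|H]; rewrite ?Hu.
- by move/(subst_eval HJ).
- exists e; split => //; rewrite Hu; exact/(subst_eval HJ).
Qed.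
End J.

Fixpoint encSubst (c : code) (J : pe) : pe :=
  match c with
  | cOracle => PAIR (Cst 4) (PAIR J (CONS (Cst (enc (cProj 0))) (Cst 0)))
  | cComp g hs => PAIR (Cst 4) (PAIR (encSubst g J)
                    (foldr (fun h acc => CONS (encSubst h J) acc) (Cst 0) hs))
  | cPrec b s => PAIR (Cst 5) (PAIR (encSubst b J) (encSubst s J))
  | cMu g => PAIR (Cst 6) (encSubst g J)
  | c => Cst (enc c)
  end.

Lemma den_encSubst o env c J D : den o env J = enc D -> den o env (encSubst c J) = enc (subst c D).
Proof.
move=> HJ; elim/code_ind2: c => [||i||g hs IHg IHhs|b s IHb IHs|g IHg] //; rewrite [encSubst _ _]/=.
- by rewrite den_PAIR den_PAIR HJ den_CONS.
- rewrite den_PAIR den_PAIR IHg den_Cst; congr (pairN _ (pairN _ _)).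
  elim: hs IHhs => // h hs IH [Hh Hhs]; rewrite [foldr _ _ _]/= den_CONS Hh IH //.
- by rewrite !den_PAIR IHb IHs.
- by rewrite !den_PAIR IHg.
Qed.

Definition encLZg (kz kp2 kT kH : nat) (h : pe) :=
  PAIR (Cst 4) (PAIR (PAIR (Cst 5) (PAIR (Cst kz) (PAIR (Cst 4) (PAIR h (CONS (Cst kp2) (Cst 0))))))
    (CONS (Cst kT) (CONS (Cst kH) (Cst 0)))).
Definition encJoing (ka kz kp2 kT kH kB : nat) (h : pe) :=
  PAIR (Cst 4) (PAIR (Cst ka) (CONS (encLZg kz kp2 kT kH h) (CONS (Cst kB) (Cst 0)))).
Definition encJoin dA (h : pe) :=
  encJoing (enc addc) (enc cZero) (enc (cProj 2)) (enc ODDc) (enc HALFc) (enc (LZ EVENc dA)) h.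

Lemma den_encJoing o env ka kz kp2 kT kH kB h :
  den o env (encJoing ka kz kp2 kT kH kB h) =
  pairN 4 (pairN ka (consN (pairN 4 (pairN (pairN 5 (pairN kz (pairN 4 (pairN (den o env h)
     (consN kp2 0))))) (consN kT (consN kH 0)))) (consN kB 0))).
Proof.
rewrite /encJoing /encLZg.
by do 3 rewrite ?den_PAIR ?den_CONS ?den_Cst.
Qed.

Lemma enc_comp2 g a b : enc (cComp g [:: a; b]) = pairN 4 (pairN (enc g) (consN (enc a) (consN (enc b) 0))).
Proof. by []. Qed.
Lemma enc_comp1 g a : enc (cComp g [:: a]) = pairN 4 (pairN (enc g) (consN (enc a) 0)).
Proof. by []. Qed.
Lemma enc_prec b s : enc (cPrec b s) = pairN 5 (pairN (enc b) (enc s)).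
Proof. by []. Qed.
Lemma enc_LZ T Dc : enc (LZ T Dc) = pairN 4 (pairN (pairN 5 (pairN (enc cZero) (pairN 4 (pairN (enc Dc)
   (consN (enc (cProj 2)) 0))))) (consN (enc T) (consN (enc HALFc) 0))).
Proof. by rewrite /LZ enc_comp2 enc_prec enc_comp1. Qed.

Lemma den_encJoin o env dA h D : den o env h = enc D -> den o env (encJoin dA h) = enc (Join dA D).
Proof.
move=> Hh; rewrite /encJoin den_encJoing Hh /Join [RHS]enc_comp2.
rewrite (enc_LZ ODDc D).
reflexivity.
Qed.

Definition encGen (S : pfun) dS (h : pe) :=
  match S 0 with
  | Some e => match (unpickle e : option code) with Some c => encSubst c (encJoin dS h) | None => Cst (enc DIV) end
  | None => Cst (enc DIV)
  end.

Lemma den_encGen o env S dS h D : den o env h = enc D -> den o env (encGen S dS h) = enc (Gen S dS D).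
Proof.
move=> Hh; rewrite /encGen /Gen; case: (S 0) => [e|] //; case: (unpickle e) => [c|] //.
by apply: den_encSubst; apply: den_encJoin.
Qed.

Lemma BZ_eq Z (a b : BZ Z) : sval a = sval b -> a = b.
Proof.
case: a b => p Hp [q Hq] /= E; subst q; congr exist; exact: proof_irrelevance.
Qed.

Lemma zc_code Z (p : pfun) : Zcomputable Z p ->
  exists d, forall x v, p x = Some v <-> eval (chi Z) d [:: x] v.
Proof.
case=> e He; rewrite /Phi in He; move: He; case: (unpickle e) => [c|] He.
- by exists c.
- exists DIV => x v; split => [/He //|/DIV_never //].
Qed.

Lemma zc_of_code Z p d : (forall x v, p x = Some v <-> eval (chi Z) d [:: x] v) -> Zcomputable Z p.
Proof. by move=> H; exists (pickle d) => n v; rewrite /Phi pickleK; apply: H. Qed.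

Definition oo (Z : nat -> bool) := fun x => nat_of_bool (Z x).

Lemma compile_iff o E n v : eval (tot o) (compile 1 E) [:: n] v <-> v = den o [:: n] E.
Proof.
split => [H|->]; last exact: (compileP o E [:: n]).
by have := eval_det H (compileP o E [:: n]).
Qed.

Lemma zc_pe Z (E : pe) p : (forall n, p n = Some (den (oo Z) [:: n] E)) -> Zcomputable Z p.
Proof.
move=> H; apply: (@zc_of_code _ _ (compile 1 E)) => x v.
rewrite H; have := compile_iff (oo Z) E x v; rewrite /chi /tot /oo => ->.
by split => [[<-]|->].
Qed.

Lemma zc_trans X Y phi : turing_le X Y -> Zcomputable X phi -> Zcomputable Y phi.
Proof.
move=> [r Hr] [e He].
have [c Hc] : exists c : code, (unpickle r : option code) = Some c.
  move: (Hr 0 (X 0)); rewrite /Phi; case: (unpickle r : option code) => [c|]; first by exists c.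
  by case=> /(_ erefl).
have HD : forall x v, chi X x = Some v <-> eval (chi Y) c [:: x] v.
  by move=> x v; rewrite Hr /Phi Hc.
move: He; rewrite /Phi; case Hu: (unpickle e) => [c'|] He.
- exists (pickle (subst c' c)) => n v; rewrite /Phi pickleK He.
  exact: subst_eval.
- by exists e => n v; rewrite /Phi Hu He.
Qed.

Lemma dir_le X Y : turing_le X Y -> exists f : BZ X -> BZ Y, pca_embedding f.
Proof.
move=> H; exists (fun a => exist _ (sval a) (zc_trans H (svalP a))); split.
- move=> a b E; apply: BZ_eq; exact: (f_equal sval E).
- by move=> a b c.
Qed.

Lemma is_app_tot (phi psi chi' : pfun) o' E :
  (forall x, pjoin phi psi x = Some (o' x)) -> phi 0 = Some (pickle (compile 1 E)) ->
  (forall n, chi' n = Some (den o' [:: n] E)) -> is_app phi psi chi'.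
Proof.
move=> Hj H0 Hc n v; rewrite Hc /appR.
have ->: pjoin phi psi = tot o' by apply: functional_extensionality => x; rewrite Hj.
split => [[<-]|[e [He HP]]].
- exists (pickle (compile 1 E)); split => //; rewrite /Phi pickleK; exact/compile_iff.
- move: He HP; rewrite H0 => -[<-]; rewrite /Phi pickleK => /compile_iff ->; by [].
Qed.

Section Fwd.
Variables X Y : nat -> bool.

Definition CS := compile 1 (Suc (Orc (Cst 1))).
Definition CAe := compile 1 (Orc (ADD (Suc (Orc (Cst 1))) (Suc (Orc (Cst 1))))).
Definition nuF n : pfun := fun _ => Some n.
Definition scF : pfun := fun _ => Some (pickle CS).
Definition aF (b : bool) : pfun :=
  fun x => Some (if x is j.+1 then nat_of_bool (X j (+) b) else pickle CAe).

Lemma nu_zc n : Zcomputable X (nuF n).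
Proof. by apply: (@zc_pe _ (Cst n)). Qed.
Lemma sc_zc : Zcomputable X scF.
Proof. by apply: (@zc_pe _ (Cst (pickle CS))). Qed.
Lemma a_zc b : Zcomputable X (aF b).
Proof.
apply: (@zc_pe _ (ITE (Var 0) (if b then ISZ (Orc (Prd (Var 0))) else Orc (Prd (Var 0)))
   (Cst (pickle CAe)))) => n.
rewrite den_ITE; case: n => [|j] //=.
by case: b; rewrite /aF ?den_ISZ den_Orc den_Prd den_V0 /oo; case: (X j).
Qed.

Definition nuB n : BZ X := exist _ (nuF n) (nu_zc n).
Definition scB : BZ X := exist _ scF sc_zc.
Definition aB b : BZ X := exist _ (aF b) (a_zc b).

Lemma app_sc n : is_app (sval scB) (sval (nuB n)) (sval (nuB n.+1)).
Proof.
apply: (@is_app_tot _ _ _ (fun x => if odd x then n else pickle CS) (Suc (Orc (Cst 1)))) => //.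
by move=> x; rewrite /pjoin /=; case: (odd x).
Qed.

Lemma app_a b n : is_app (sval (aB b)) (sval (nuB n)) (sval (nuB (X n (+) b))).
Proof.
apply: (@is_app_tot _ _ _ (fun x => if odd x then n else
   (if x./2 is j.+1 then nat_of_bool (X j (+) b) else pickle CAe))
   (Orc (ADD (Suc (Orc (Cst 1))) (Suc (Orc (Cst 1)))))) => //.
- by move=> x; rewrite /pjoin /=; case: (odd x).
- move=> m; rewrite den_Orc den_ADD !den_Suc !den_Orc den_Cst; cbv beta.
  by rewrite -[odd 1]/true addnn odd_double doubleK.
Qed.
End Fwd.

Section Main.
Variables X Y : nat -> bool.
Variable F : BZ X -> BZ Y.
Hypothesis HF : pca_embedding F.
Local Notation oY := (oo Y).

Definition Sf := sval (F (scB X)).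
Definition Nf n := sval (F (nuB X n)).
Definition Af b := sval (F (aB X b)).

Lemma HSapp n : is_app Sf (Nf n) (Nf n.+1).
Proof. exact: (HF.2 _ _ _ (app_sc X n)). Qed.
Lemma HAapp b n : is_app (Af b) (Nf n) (Nf (X n (+) b)).
Proof. exact: (HF.2 _ _ _ (app_a X b n)). Qed.

Variables dS d0 dA0 dA1 : code.
Hypothesis HdS : forall x v, Sf x = Some v <-> eval (tot oY) dS [:: x] v.
Hypothesis Hd0 : forall x v, Nf 0 x = Some v <-> eval (tot oY) d0 [:: x] v.
Hypothesis HdA0 : forall x v, Af false x = Some v <-> eval (tot oY) dA0 [:: x] v.
Hypothesis HdA1 : forall x v, Af true x = Some v <-> eval (tot oY) dA1 [:: x] v.

Definition dA (b : bool) := if b then dA1 else dA0.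
Lemma HdA b x v : Af b x = Some v <-> eval (tot oY) (dA b) [:: x] v.
Proof. by case: b; [apply: HdA1 | apply: HdA0]. Qed.

Definition Kc n := iter n (Gen Sf dS) d0.
Lemma HK n x v : Nf n x = Some v <-> eval (tot oY) (Kc n) [:: x] v.
Proof.
elim: n x v => [|n IH] x v; first exact: Hd0.
rewrite HSapp; exact: (Gen_spec HdS IH).
Qed.

Definition Rc b n := Gen (Af b) (dA b) (Kc n).
Lemma HR b n x v : Nf (X n (+) b) x = Some v <-> eval (tot oY) (Rc b n) [:: x] v.
Proof. rewrite HAapp; exact: (Gen_spec (HdA b) (HK n)). Qed.

Definition encK (nv : pe) := Iter nv (encGen Sf dS (Var 0)) (Cst (enc d0)).
Lemma den_encK env nv : den oY env (encK nv) = enc (Kc (den oY env nv)).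
Proof.
rewrite /encK den_Iter den_Cst; elim: (den oY env nv) => [|k IH]; first by [].
rewrite iterS IH /Kc iterS; apply: den_encGen; exact: den_V0.
Qed.
Definition encR b (nv : pe) := encGen (Af b) (dA b) (encK nv).
Lemma den_encR env b nv : den oY env (encR b nv) = enc (Rc b (den oY env nv)).
Proof. by apply: den_encGen; rewrite den_encK. Qed.

Variables (m w : nat) (bb : bool).
Hypothesis Hb1 : Nf bb m = Some w.
Hypothesis Hb2 : Nf (~~ bb) m <> Some w.

Definition tst T n := okN oY T && (memN T (enc (Rc false n)) (encl [:: m]) w ||
                                   memN T (enc (Rc true n)) (encl [:: m]) w).
Definition TEST := AND (OKpe (Var 0)) (OR (MEM (Var 0) (encR false (Var 1)) (Cst (encl [:: m])) (Cst w))
                                         (MEM (Var 0) (encR true (Var 1)) (Cst (encl [:: m])) (Cst w))).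
Lemma den_TEST T n : den oY [:: T; n] TEST = tst T n.
Proof.
rewrite /TEST den_AND' den_OKpe den_OR' !den_MEM !den_encR !den_Cst.
by rewrite !den_V0 !den_VS !den_V0 nb_or nb_mul.
Qed.
Definition OUT := ITE (MEM (Var 0) (encR false (Var 1)) (Cst (encl [:: m])) (Cst w)) (Cst bb) (Cst (~~ bb)).
Lemma den_OUT T n : den oY [:: T; n] OUT =
  (if memN T (enc (Rc false n)) (encl [:: m]) w then bb else ~~ bb).
Proof.
rewrite /OUT den_ITE den_MEM den_encR !den_V0 !den_VS !den_V0 nb_neq0.
by case: (memN _ _ _ _).
Qed.

Lemma tst_sound T n : tst T n -> (if memN T (enc (Rc false n)) (encl [:: m]) w then bb else ~~ bb) = X n.
Proof.
case/andP => Hok H; case E: (memN _ _ _ _).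
- have := sound Hok E; rewrite -HR addbF => HX.
  by move: Hb1 Hb2; case: bb; case: (X n) HX => // ->.
- rewrite E orFb in H; have := sound Hok H; rewrite -HR addbT => HX.
  by move: Hb1 Hb2; case: bb; case: (X n) HX => // ->.
Qed.

Lemma tst_ex n : exists T, tst T n.
Proof.
case E: (X n == bb).
- have: Nf (X n (+) false) m = Some w by rewrite addbF (eqP E) Hb1.
  move/HR/complete => [L [HL HM]]; exists (encl L); rewrite /tst; move: HL HM; rewrite /ok /memL => -> -> //.
- have: Nf (X n (+) true) m = Some w by move: E Hb1; rewrite addbT; case: (X n); case: bb.
  move/HR/complete => [L [HL HM]]; exists (encl L); rewrite /tst; move: HL HM; rewrite /ok /memL => -> ->; by rewrite orbT.
Qed.

Definition Gc := compile 2 (ISZ TEST).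
Definition FC := cComp (compile 2 OUT) [:: cMu Gc; cProj 0].

Lemma Gc_ev T n : eval (tot oY) Gc [:: T; n] (~~ tst T n).
Proof.
have := compileP oY (ISZ TEST) [:: T; n]; rewrite den_ISZ den_TEST.
by case: (tst T n).
Qed.

Lemma FC_spec n v : eval (tot oY) FC [:: n] v <-> v = X n.
Proof.
split.
- move/comp_iff => [ys [Hs Hout]].
  move/evals_cons_iff: Hs => [T0 [ys1 [E1 [Hmu /evals_cons_iff [n' [ys2 [E2 [/proj_iff [_ /= E3] /evals_nil_iff E4]]]]]]]].
  subst ys ys1 ys2 n'.
  have HT : tst T0 n.
    inversion Hmu; subst.
    match goal with H : eval _ Gc _ 0 |- _ => have := eval_det H (Gc_ev T0 n) end.
    by case: (tst T0 n).
  have := eval_det Hout (compileP oY OUT [:: T0; n]); rewrite den_OUT (tst_sound HT) => ->.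
  by [].
- move=> ->.
  case: (ex_minnP (tst_ex n)) => T0 HT0 Hmin.
  apply/comp_iff; exists [:: T0; n]; split.
  + apply: evs_cons; last apply: evs_cons.
    * apply: ev_mu; first by have := Gc_ev T0 n; rewrite HT0.
      move=> k Hk; exists 0; have := Gc_ev k n.
      case Ek: (tst k n) => //; have := Hmin _ Ek; lia.
    * exact: (@ev_proj _ 0 [:: n]).
    * exact: evs_nil.
  + have := compileP oY OUT [:: T0; n]; rewrite den_OUT (tst_sound HT0); exact.
Qed.
End Main.

Lemma dir_ge X Y : (exists f : BZ X -> BZ Y, pca_embedding f) -> turing_le X Y.
Proof.
case=> F HF.
have [dS HdS] := zc_code (svalP (F (scB X))).
have [d0 Hd0] := zc_code (svalP (F (nuB X 0))).
have [dA0 HdA0] := zc_code (svalP (F (aB X false))).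
have [dA1 HdA1] := zc_code (svalP (F (aB X true))).
have Hneq : Nf F 0 <> Nf F 1.
  move=> E; have E' : F (nuB X 0) = F (nuB X 1) by apply: BZ_eq.
  by have := f_equal (fun a => sval a 0) (HF.1 _ _ E').
have [m Hm] : exists m, Nf F 0 m <> Nf F 1 m.
  apply: NNPP => Hn; apply: Hneq; apply: functional_extensionality => m.
  apply: NNPP => H; apply: Hn; by exists m.
have [bb [w [Hb1 Hb2]]] : exists (bb : bool) w, Nf F bb m = Some w /\ Nf F (~~ bb) m <> Some w.
  case E0: (Nf F 0 m) Hm => [w|] Hm.
  - by exists false, w; split => // E1; apply: Hm; rewrite E1.
  - case E1: (Nf F 1 m) Hm => [w|] Hm //.
    by exists true, w; split => //; rewrite /= E0.
apply: (@zc_of_code _ _ (FC F dS d0 dA0 dA1 m w bb)) => x v.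
have := FC_spec HF HdS Hd0 HdA0 HdA1 Hb1 Hb2 x v; rewrite /chi => ->.
by split => [[<-]|->].
Qed.


Theorem theorem6p12 (X Y : nat -> bool) :
  (exists f : BZ X -> BZ Y, pca_embedding f) <-> turing_le X Y.
Proof. split; [exact: dir_ge | exact: dir_le]. Qed.
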